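(* Let $\mathcal{G}$ be a compact group with normalized Haar measure $\lambda$ acting measurably on $\mathcal{X}$, let $\mathcal{P}$ be a $\mathcal{G}$-invariant distribution on $\mathcal{X}\times\mathcal{Y}$, let $\ell$ be the binary 0-1 loss, let $C>0$, and let $P$ be any distribution on a class $\mathcal{F}$ of functions $\mathcal{X}\to\mathcal{Y}$. Then $$\mathbb{E}_{f\sim P}\Big[\mathbb{E}_{\mathcal{D}^n\sim\mathcal{P}^n}\big[e^{n\mathscr{D}_C(\hat{R}_{\mathrm{aug}}(f,\mathcal{D}^n),R(f))}\big]\Big]\le\mathbb{E}_{f\sim P}\Big[\mathbb{E}_{\mathcal{D}^n\sim\mathcal{P}^n}\big[e^{n\mathscr{D}_C(\hat{R}(f,\mathcal{D}^n),R(f))}\big]\Big]=1$$ and $$\mathbb{E}_{f\sim P}\Big[\mathbb{E}_{\mathcal{D}^n\sim\mathcal{P}^n}\big[e^{n\mathscr{D}_C(\hat{R}^{(m)}_{\mathrm{aug}}(f,\mathcal{D}^n),R(f))}\big]\Big]\le\mathbb{E}_{f\sim P}\Big[\mathbb{E}_{\mathcal{D}^n\sim\mathcal{P}^n}\big[e^{n\mathscr{D}_C(\hat{R}(f,\mathcal{D}^n),R(f))}\big]\Big]=1.$$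
   Context: $\mathcal{P}$ is $\mathcal{G}$-invariant if $(gX,Y)\overset{d}{=}(X,Y)$ for all $g\in\mathcal{G}$. $\mathcal{D}^n=((X_i,Y_i))_{i=1}^n$ i.i.d. from $\mathcal{P}$. $R(f)=\mathbb{E}_{\mathcal{P}}[\ell(f(X),Y)]$, $\hat{R}(f,\mathcal{D}^n)=\frac1n\sum_i\ell(f(X_i),Y_i)$, $\hat{R}_{\mathrm{aug}}(f,\mathcal{D}^n)=\frac1n\sum_i\mathbb{E}_{G\sim\lambda}[\ell(f(GX_i),Y_i)]$, and the Monte Carlo augmented risk is $\hat{R}^{(m)}_{\mathrm{aug}}(f,\mathcal{D}^n)=\frac1{nm}\sum_{i=1}^n\sum_{j=1}^m\ell(f(G_{ij}X_i),Y_i)$ with $(G_{ij})$ i.i.d. from $\lambda$ independent of the data; in the expression involving $\hat{R}^{(m)}_{\mathrm{aug}}$ the inner expectation is taken jointly over $\mathcal{D}^n$ and the $G_{ij}$. For $q,p\in(0,1)$, $\mathscr{D}_C(q,p)=-\log(1-p(1-e^{-C}))-Cq$. *)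

(* Defs.v *)
From HB Require Import structures.
From mathcomp Require Import all_boot all_order all_algebra.
From mathcomp Require Import all_classical all_reals all_analysis.

Set Implicit Arguments.
Unset Strict Implicit.
Unset Printing Implicit Defensive.

Import Order.TTheory GRing.Theory Num.Theory.
Local Open Scope classical_set_scope.
Local Open Scope ring_scope.

Definition loss01 (R : realType) (Y : eqType) (y' y : Y) : R :=
  if y' == y then 0 else 1.

Definition DC (R : realType) (C q p : R) : R :=
  - ln (1 - p * (1 - expR (- C))) - C * q.

(* n-fold product expectation  E_{s ~ mu^n}[F s], as the iterated integral
   (equal to the integral against the product measure mu^n by Tonelli,
   for nonnegative measurable F); the sample s is a list of length n. *)
Fixpoint iexp d (T : measurableType d) (R : realType) (mu : probability T R)
    (n : nat) (F : seq T -> \bar R) : \bar R :=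
  match n with
  | 0 => F [::]
  | k.+1 => (\int[mu]_x iexp mu k (fun s => F (x :: s)))%E
  end.

Definition risk dX dY (X : measurableType dX) (Y : measurableType dY)
    (R : realType) (P : probability (X * Y)%type R) (f : X -> Y) : R :=
  fine (\int[P]_z (loss01 R (f z.1) z.2)%:E)%E.

Definition emp_risk dX dY (X : measurableType dX) (Y : measurableType dY)
    (R : realType) (n : nat) (f : X -> Y) (D : seq (X * Y)%type) : R :=
  n%:R^-1 * \sum_(z <- D) loss01 R (f z.1) z.2.

Definition aug_risk dG dX dY (G : measurableType dG) (X : measurableType dX)
    (Y : measurableType dY) (R : realType) (lam : probability G R)
    (act : G -> X -> X) (n : nat) (f : X -> Y) (D : seq (X * Y)%type) : R :=
  n%:R^-1 * \sum_(z <- D)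
     fine (\int[lam]_g (loss01 R (f (act g z.1)) z.2)%:E)%E.

(* Monte Carlo augmented risk (1/(nm)) sum_{i<n} sum_{j<m} l(f(G_ij X_i), Y_i),
   where G_ij is the (i*m+j)-th entry of the list Gs (of length n*m). *)
Definition mc_aug_risk dG dX dY (G : measurableType dG) (X : measurableType dX)
    (Y : measurableType dY) (R : realType) (act : G -> X -> X) (n m : nat)
    (f : X -> Y) (D : seq (X * Y)%type) (Gs : seq G) : R :=
  (n * m)%:R^-1 * \sum_(i < n) \sum_(j < m)
     loss01 R (f (act (nth point Gs (i * m + j)) (nth point D i).1))
              (nth point D i).2.

Definition G_invariant dG dX dY (G : measurableType dG) (X : measurableType dX)
    (Y : measurableType dY) (R : realType) (act : G -> X -> X)
    (P : probability (X * Y)%type R) : Prop :=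
  forall g (A : set (X * Y)%type), measurable A ->
    P ((fun z : X * Y => (act g z.1, z.2)) @^-1` A) = P A.

(* Main.v *)
Require Import Defs.
From HB Require Import structures.
From mathcomp Require Import all_boot all_order all_algebra.
From mathcomp Require Import all_classical all_reals all_analysis.
From mathcomp Require Import measurable_realfun ring lra.
Import Order.TTheory GRing.Theory Num.Theory.
Local Open Scope classical_set_scope.
Local Open Scope ring_scope.
Section gen.
Context {d} {T : measurableType d} {R : realType} (mu : probability T R).
Local Open Scope ereal_scope.

Lemma le_integral_nm (f g : T -> \bar R) : (forall x, 0 <= f x) ->
  (forall x, f x <= g x) -> \int[mu]_x f x <= \int[mu]_x g x.
Proof.
move=> f0 fg.
have g0 x : 0 <= g x by apply: le_trans (f0 x) (fg x).
rewrite !ge0_integralTE//; apply: ereal_sup_le.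
move=> _ [h hf <-]; exists h => //= x; exact: le_trans (hf x) (fg x).
Qed.

Lemma iexp_ext N (F F' : seq T -> \bar R) :
  (forall s, size s = N -> F s = F' s) -> iexp mu N F = iexp mu N F'.
Proof.
elim: N F F' => [|N IH] F F' H /=; first by rewrite H.
apply: eq_integral => x _; apply: IH => s hs; apply: H => /=; rewrite hs.
done.
Qed.

Lemma int01 (f : T -> R) : measurable_fun setT f ->
  (forall x, 0 <= f x <= 1)%R ->
  \int[mu]_x (f x)%:E = (fine (\int[mu]_x (f x)%:E))%:E /\
  (0 <= fine (\int[mu]_x (f x)%:E) <= 1)%R.
Proof.
move=> mf f01.
have i0 : 0 <= \int[mu]_x (f x)%:E.
  by apply: integral_ge0 => x _; rewrite lee_fin; case/andP: (f01 x).
have i1 : \int[mu]_x (f x)%:E <= 1.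
  apply: le_trans (_ : \int[mu]_x (cst 1 x) <= _).
    apply: ge0_le_integral => //.
    - by move=> x _; rewrite lee_fin; case/andP: (f01 x).
    - exact: measurableT_comp.
    - by move=> x _; rewrite /= lee_fin; case/andP: (f01 x).
  have P1 : (mu : {measure set T -> \bar R}) setT = 1 := probability_setT mu.
  by rewrite integral_cst// P1 mule1.
have fin : \int[mu]_x (f x)%:E \is a fin_num by rewrite ge0_fin_numE// (le_lt_trans i1) ?ltry.
split; first by rewrite fineK.
by apply/andP; split; rewrite -lee_fin fineK.
Qed.

Lemma int_lin (f : T -> R) (c : R) : measurable_fun setT f ->
  (forall x, 0 <= f x <= 1)%R -> (0 <= c <= 1)%R ->
  fine (\int[mu]_x (1 - c * f x)%:E) = (1 - c * fine (\int[mu]_x (f x)%:E))%R.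
Proof.
move=> mf f01 /andP[c0 c1].
have [E1 _] := int01 _ mf f01.
have mg : measurable_fun setT (fun x => 1 - c * f x)%R.
  by apply: measurable_funB => //; apply: measurable_funM.
have g01 x : (0 <= 1 - c * f x <= 1)%R.
  by case/andP: (f01 x) => a b; apply/andP; split; nra.
have [E2 _] := int01 _ mg g01.
have : \int[mu]_x ((1 - c * f x)%:E + (c%:E * (f x)%:E)) = 1.
  under eq_integral do rewrite -EFinM -EFinD subrK.
  have P1 : (mu : {measure set T -> \bar R}) setT = 1 := probability_setT mu.
  by rewrite integral_cst// P1 mule1.
rewrite ge0_integralD//; last 4 first.
- by move=> x _; rewrite lee_fin; case/andP: (g01 x).
- exact: measurableT_comp.
- by move=> x _; rewrite lee_fin; case/andP: (f01 x) => a _; nra.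
- by apply: measurable_funeM; exact: measurableT_comp.
rewrite ge0_integralZl_EFin//; last 2 first.
- by move=> x _; rewrite lee_fin; case/andP: (f01 x).
- exact: measurableT_comp.
rewrite E1 E2 -EFinM -EFinD => -[] H. rewrite /= in H *.
lra. Qed.

Lemma iexp_prod N (K : R) (g : nat -> T -> R) :
  (0 <= K)%R -> (forall k, measurable_fun setT (g k)) ->
  (forall k x, 0 <= g k x <= 1)%R ->
  iexp mu N (fun s => (K * \prod_(k < N) g k (nth point s k))%:E) =
  (K * \prod_(k < N) fine (\int[mu]_x (g k x)%:E))%:E.
Proof.
elim: N K g => [|N IH] K g K0 mg g01 /=; first by rewrite !big_ord0.
transitivity (\int[mu]_x ((K * \prod_(k < N) fine (\int[mu]_y (g k.+1 y)%:E))%:E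
   * (g 0%N x)%:E)).
  apply: eq_integral => x _.
  have g0x : (0 <= g 0%N x)%R by case/andP: (g01 0%N x).
  have := IH (K * g 0%N x)%R (fun k => g k.+1) (mulr_ge0 K0 g0x) (fun k => mg k.+1)
    (fun k => g01 k.+1).
  rewrite (_ : (fun s => _) = (fun s => (K * \prod_(k < N.+1) g k (nth point (x :: s) k))%:E)).
    by move=> ->; rewrite -EFinM; congr EFin; rewrite mulrAC.
  apply: funext => s; rewrite big_ord_recl /= mulrA; congr (_ * _)%:E.
rewrite ge0_integralZl_EFin//; last 3 first.
- by move=> x _; rewrite lee_fin; case/andP: (g01 0%N x).
- exact: measurableT_comp.
- apply: mulr_ge0 => //; apply: prodr_ge0 => i _.
  by have [_ /andP[]] := int01 _ (mg i.+1) (g01 i.+1).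
have [-> _] := int01 _ (mg 0%N) (g01 0%N).
by rewrite -EFinM big_ord_recl /= mulrAC -mulrA.
Qed.

Lemma iexp_seqprod N (K : R) (u : T -> R) :
  (0 <= K)%R -> measurable_fun setT u -> (forall x, 0 <= u x <= 1)%R ->
  iexp mu N (fun s => (K * \prod_(z <- s) u z)%:E) =
  (K * (fine (\int[mu]_x (u x)%:E)) ^+ N)%:E.
Proof.
move=> K0 mu0 u01.
rewrite (@iexp_ext N _ (fun s => (K * \prod_(k < N) (fun _ => u) k (nth point s k))%:E)).
  by rewrite (@iexp_prod N K (fun _ => u))// prodr_const card_ord.
move=> s hs; congr (_ * _)%:E.
by rewrite (big_nth point) hs big_mkord.
Qed.

End gen.

Section realfacts.
Variable R : realType.
Local Open Scope convex_scope.
Lemma expR_chord (C b : R) : 0 <= b -> b <= 1 ->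
  expR (- C * b) <= 1 - (1 - expR (- C)) * b.
Proof.
move=> b0 b1.
have := convex_expR (Itv01 b0 b1) (- C) 0.
rewrite !convRE /= expR0 /unstable.onem.
rewrite (_ : b * - C + (1 - b) * 0 = - C * b); last by ring.
move=> H; apply: le_trans H _.
have -> : b * expR (- C) + (1 - b) * 1 = 1 - (1 - expR (- C)) * b by ring.
done.
Qed.
Local Close Scope convex_scope.

Lemma pow_chord (r b : R) (m : nat) : 0 <= r -> r <= 1 -> 0 <= b -> b <= 1 ->
  (1 - (1 - r) * b) ^+ m <= 1 - (1 - r ^+ m) * b.
Proof.
move=> r0 r1 b0 b1.
elim: m => [|m IH]; first by rewrite !expr0 subrr mul0r subr0.
have q0 : 0 <= 1 - (1 - r) * b by nra.
have rm0 : 0 <= r ^+ m by exact: exprn_ge0.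
have rm1 : r ^+ m <= 1 by exact: exprn_ile1.
rewrite exprS (exprS r).
apply: le_trans (_ : (1 - (1 - r) * b) * (1 - (1 - r ^+ m) * b) <= _).
  exact: ler_wpM2l.
have h1 : 0 <= b * (1 - b) by nra.
have h2 : 0 <= (1 - r) * (1 - r ^+ m) by nra.
have : 0 <= b * (1 - b) * ((1 - r) * (1 - r ^+ m)) by exact: mulr_ge0.
nra.
Qed.

Lemma prod_reidx (n m : nat) (F : nat -> R) :
  \prod_(i < n) \prod_(j < m) F (i * m + j)%N = \prod_(k < n * m) F k.
Proof.
elim: n => [|n IH]; first by rewrite big_ord0 mul0n big_ord0.
rewrite big_ord_recr IH /= mulSnr big_split_ord /=.
done.
Qed.

Lemma loss01_01 (Y : eqType) (y1 y2 : Y) : 0 <= loss01 R y1 y2 <= 1.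
Proof. by rewrite /loss01; case: ifP => _; rewrite ?lexx ?ler01. Qed.

Lemma expR_loss (Y : eqType) (c : R) (y1 y2 : Y) :
  expR (- c * loss01 R y1 y2) = 1 - (1 - expR (- c)) * loss01 R y1 y2.
Proof.
rewrite /loss01; case: ifP => _; first by rewrite !mulr0 expR0 subr0.
by rewrite !mulr1 opprB addrC subrK.
Qed.

End realfacts.
Section main.
Context (R : realType) (dG dX dY : measure_display) (G : measurableType dG)
  (X : measurableType dX) (Y : measurableType dY) (lam : probability G R)
  (act : G -> X -> X) (P : probability (X * Y)%type R)
  (P_inv : G_invariant act P)
  (act_meas : measurable_fun setT (fun p : G * X => act p.1 p.2))
  (f : X -> Y)
  (ml : measurable_fun setT (fun z : X * Y => loss01 R (f z.1) z.2))
  (mL : measurable_fun setT (fun q : G * (X * Y) => loss01 R (f (act q.1 q.2.1)) q.2.2)).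

Let l (z : X * Y) := loss01 R (f z.1) z.2.
Let L (g : G) (z : X * Y) := loss01 R (f (act g z.1)) z.2.
Let p := risk P f.
Let b (z : X * Y) := fine (\int[lam]_g (L g z)%:E)%E.

Lemma l01 z : 0 <= l z <= 1. Proof. exact: loss01_01. Qed.
Lemma L01 g z : 0 <= L g z <= 1. Proof. exact: loss01_01. Qed.

Lemma mLz z : measurable_fun setT (fun g => L g z).
Proof. exact: (measurableT_comp mL (pair2_measurable z)). Qed.

Lemma bE z : (\int[lam]_g (L g z)%:E = (b z)%:E)%E.
Proof. by have [] := int01 lam _ (mLz z) (L01 ^~ z). Qed.

Lemma b01 z : 0 <= b z <= 1.
Proof. by have [] := int01 lam _ (mLz z) (L01 ^~ z). Qed.

Lemma pE : (\int[P]_z (l z)%:E = p%:E)%E.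
Proof. by have [] := int01 P _ ml l01. Qed.

Lemma p01 : 0 <= p <= 1.
Proof. by have [] := int01 P _ ml l01. Qed.

Lemma mb : measurable_fun setT b.
Proof.
apply: (measurableT_comp (fine_measurable _)) => //.
have := @measurable_fun_fubini_tonelli_G _ _ _ _ _ lam
  (fun q : G * (X * Y) => (L q.1 q.2)%:E).
apply.
- exact: measurableT_comp.
- by move=> q; rewrite lee_fin; case/andP: (L01 q.1 q.2).
Qed.

Lemma int_b : (\int[P]_z (b z)%:E = p%:E)%E.
Proof.
transitivity (\int[P]_z \int[lam]_g (L g z)%:E)%E.
  by apply: eq_integral => z _; rewrite bE.
rewrite -(fubini_tonelli (fun q : G * (X * Y) => (L q.1 q.2)%:E)); last 2 first.
- exact: measurableT_comp.
- by move=> q; rewrite lee_fin; case/andP: (L01 q.1 q.2).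
transitivity (\int[lam]_g p%:E)%E; last first.
  have P1 : (lam : {measure set G -> \bar R}) setT = 1%E := probability_setT lam.
  by rewrite integral_cst// P1 mule1.
apply: eq_integral => g _.
rewrite -pE.
pose phi := fun z : X * Y => (act g z.1, z.2).
have mphi : measurable_fun setT phi.
  apply/measurable_fun_pairP; split => /=.
    exact: (measurableT_comp act_meas (measurable_fun_pair (measurable_cst g) measurable_fst)).
  exact: measurable_snd.
have H1 : (\int[pushforward P phi]_z (l z)%:E = \int[P]_z (l (phi z))%:E)%E.
  rewrite ge0_integral_pushforward//.
  all: try exact: measurableT_comp.
  all: try by move=> z _; rewrite lee_fin; case/andP: (l01 z).
have H2 : (\int[pushforward P phi]_z (l z)%:E = \int[P]_z (l z)%:E)%E.
  apply: eq_measure_integral => A mA _.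
  exact: P_inv g A mA.
by rewrite -H2 H1.
Qed.

Section comp.
Context (C : R) (C_gt0 : 0 < C) (n m : nat) (n_gt0 : (0 < n)%N) (m_gt0 : (0 < m)%N).

Let c := 1 - expR (- C).
Let a := 1 - p * c.
Let K := expR (- (n%:R * ln a)).

Lemma c01 : 0 <= c <= 1.
Proof.
rewrite /c; apply/andP; split.
  by rewrite subr_ge0 expR_le1 oppr_le0 ltW.
by rewrite lerBlDr lerDl expR_ge0.
Qed.

Lemma a_gt0 : 0 < a.
Proof.
have /andP[p0 p1] := p01; have /andP[c0 c1] := c01.
have : 0 < expR (- C) := expR_gt0 _.
rewrite /a /c in c0 c1 *; nra.
Qed.

Lemma K0 : 0 <= K. Proof. exact: expR_ge0. Qed.

Lemma Ka : K * a ^+ n = 1.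
Proof.
rewrite /K expRN expRM_natl lnK ?posrE ?a_gt0// mulVf//.
by rewrite expf_neq0// gt_eqF// a_gt0.
Qed.

Lemma expDC q : expR (n%:R * DC C q p) = K * expR (- C * (n%:R * q)).
Proof. by rewrite /DC -expRD /K /a /c; congr expR; ring. Qed.

Lemma final_bound (w : X * Y -> R) : measurable_fun setT w ->
  (forall z, 0 <= w z <= 1) -> (forall z, w z <= 1 - c * b z) ->
  K * (fine (\int[P]_z (w z)%:E)%E) ^+ n <= 1.
Proof.
move=> mw w01 wle.
have /andP[c0 c1] := c01.
have mv : measurable_fun setT (fun z => 1 - c * b z).
  by apply: measurable_funB => //; apply: measurable_funM => //; exact: mb.
have v01 z : 0 <= 1 - c * b z <= 1.
  by have /andP[b0 b1] := b01 z; apply/andP; split; nra.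
have [Ew _] := int01 P _ mw w01.
have [Ev _] := int01 P _ mv v01.
have le : fine (\int[P]_z (w z)%:E)%E <= fine (\int[P]_z (1 - c * b z)%:E)%E.
  rewrite -lee_fin -Ew -Ev; apply: ge0_le_integral => //.
  - by move=> z _; rewrite lee_fin; case/andP: (w01 z).
  - exact: measurableT_comp.
  - exact: measurableT_comp.
  - by move=> z _; rewrite lee_fin.
have Ea : fine (\int[P]_z (1 - c * b z)%:E)%E = a.
  rewrite (int_lin P b c mb b01 c01).
  by rewrite int_b /= /a mulrC.
rewrite Ea in le.
rewrite -Ka; apply: ler_wpM2l; first exact: K0.
have [_ /andP[w0 _]] := int01 P _ mw w01.
by rewrite lerXn2r // nnegrE ltW // a_gt0.
Qed.

Lemma n0 : n%:R != 0 :> R. Proof. by rewrite pnatr_eq0 -lt0n. Qed.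
Lemma m0 : m%:R != 0 :> R. Proof. by rewrite pnatr_eq0 -lt0n. Qed.

Lemma emp_t : iexp P n (fun D => (expR (n%:R * DC C (emp_risk R n f D) p))%:E) = 1%E.
Proof.
have /andP[c0 c1] := c01.
have mu : measurable_fun setT (fun z => 1 - c * l z).
  by apply: measurable_funB => //; apply: measurable_funM.
have u01 z : 0 <= 1 - c * l z <= 1.
  by have /andP[l0 l1] := l01 z; apply/andP; split; nra.
rewrite (_ : (fun D => _) = fun D => (K * \prod_(z <- D) (1 - c * l z))%:E).
  rewrite (iexp_seqprod P n K _ K0 mu u01) (int_lin P l c ml l01 c01) pE /=.
  by rewrite (mulrC c) -/a Ka.
apply: funext => D; congr EFin; rewrite expDC /emp_risk (mulVKf n0).
rewrite mulr_sumr expR_sum; congr (_ * _); apply: eq_bigr => z _.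
by rewrite expR_loss.
Qed.

Lemma aug_t : (0 <= iexp P n (fun D =>
   (expR (n%:R * DC C (aug_risk lam act n f D) p))%:E) <= 1)%E.
Proof.
have /andP[c0 c1] := c01.
have mu : measurable_fun setT (fun z => expR (- C * b z)).
  apply: (measurableT_comp (@measurable_expR R)).
  by apply: measurable_funM => //; exact: mb.
have u01 z : 0 <= expR (- C * b z) <= 1.
  have /andP[b0 b1] := b01 z.
  by rewrite expR_ge0 expR_le1 mulNr oppr_le0 mulr_ge0// ltW.
rewrite (_ : (fun D => _) = fun D => (K * \prod_(z <- D) expR (- C * b z))%:E).
  rewrite (iexp_seqprod P n K _ K0 mu u01) !lee_fin.
  have [_ /andP[w0 _]] := int01 P _ mu u01.
  rewrite mulr_ge0 ?K0 ?exprn_ge0//=.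
  apply: final_bound => // z.
  by have /andP[b0 b1] := b01 z; exact: expR_chord.
apply: funext => D; congr EFin; rewrite expDC /aug_risk (mulVKf n0).
by rewrite mulr_sumr expR_sum.
Qed.

Let c' := 1 - expR (- (C / m%:R)).

Lemma c'01 : 0 <= c' <= 1.
Proof.
rewrite /c'; apply/andP; split.
  by rewrite subr_ge0 expR_le1 oppr_le0 divr_ge0// ltW.
by rewrite lerBlDr lerDl expR_ge0.
Qed.

Lemma mc_inner D : iexp lam (n * m) (fun Gs =>
    (expR (n%:R * DC C (mc_aug_risk R act n m f D Gs) p))%:E) =
  (K * \prod_(i < n) (1 - c' * b (nth point D i)) ^+ m)%:E.
Proof.
have /andP[c0 c1] := c'01.
pose gk := fun k g => 1 - c' * L g (nth point D (k %/ m)).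
have mg k : measurable_fun setT (gk k).
  by apply: measurable_funB => //; apply: measurable_funM => //; exact: mLz.
have g01 k x : 0 <= gk k x <= 1.
  by rewrite /gk; have /andP[l0 l1] := L01 x (nth point D (k %/ m)); apply/andP; split; nra.
rewrite (_ : (fun Gs => _) = fun Gs => (K * \prod_(k < n * m) gk k (nth point Gs k))%:E).
  rewrite (iexp_prod lam (n * m) K gk K0 mg g01); congr (K * _)%:E.
  rewrite -(@prod_reidx R n m (fun k => fine (\int[lam]_x (gk k x)%:E)%E)); apply: eq_bigr => i _.
  rewrite -[in RHS](card_ord m) -prodr_const; apply: eq_bigr => j _.
  rewrite /gk divnMDl// divn_small// addn0.
  by rewrite (int_lin lam (fun g => L g (nth point D i)) c' (mLz _) (L01 ^~ _) c'01).
apply: funext => Gs; congr EFin; rewrite expDC; congr (K * _).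
rewrite /mc_aug_risk.
have -> : forall S : R, - C * (n%:R * ((n * m)%:R^-1 * S)) = - (C / m%:R) * S.
  by move=> S; rewrite natrM invfM; field; rewrite n0 m0.
rewrite -(@prod_reidx R n m (fun k => gk k (nth point Gs k))) mulr_sumr expR_sum; apply: eq_bigr => i _.
rewrite mulr_sumr expR_sum; apply: eq_bigr => j _.
by rewrite expR_loss /gk /L divnMDl// divn_small// addn0.
Qed.

Lemma mc_t : (0 <= iexp P n (fun D => iexp lam (n * m) (fun Gs =>
   (expR (n%:R * DC C (mc_aug_risk R act n m f D Gs) p))%:E)) <= 1)%E.
Proof.
have /andP[c0 c1] := c'01.
rewrite (_ : (fun D => _) = fun D => (K * \prod_(i < n) (fun _ z => (1 - c' * b z) ^+ m) i (nth point D i))%:E); last first.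
  by apply: funext => D; rewrite mc_inner.
have mw : measurable_fun setT (fun z => (1 - c' * b z) ^+ m).
  apply: measurable_funX.
  by apply: measurable_funB => //; apply: measurable_funM => //; exact: mb.
have v01 z : 0 <= 1 - c' * b z <= 1.
  by have /andP[b0 b1] := b01 z; apply/andP; split; nra.
have w01 z : 0 <= (1 - c' * b z) ^+ m <= 1.
  by have /andP[v0 v1] := v01 z; rewrite exprn_ge0 ?exprn_ile1.
rewrite (@iexp_prod _ _ _ P n K (fun _ z => (1 - c' * b z) ^+ m) K0 (fun _ => mw) (fun _ => w01)).
rewrite prodr_const card_ord !lee_fin.
have [_ /andP[w0 _]] := int01 P _ mw w01.
rewrite mulr_ge0 ?K0 ?exprn_ge0//=.
apply: final_bound => // z.
have /andP[b0 b1] := b01 z.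
have := @pow_chord R (expR (- (C / m%:R))) (b z) m (expR_ge0 _) _ b0 b1.
rewrite -expRM_natl (_ : m%:R * - (C / m%:R) = - C); last first.
  by field; rewrite m0.
apply.
by rewrite expR_le1 oppr_le0 divr_ge0// ltW.
Qed.

End comp.

End main.
Theorem lemmaA2 (R : realType)
  (dG dX dY dT : measure_display)
  (G : measurableType dG) (X : measurableType dX) (Y : measurableType dY)
  (Theta : measurableType dT)
  (* group structure on G *)
  (mul : G -> G -> G) (inv : G -> G) (one : G)
  (mulA : forall a b c, mul a (mul b c) = mul (mul a b) c)
  (mul1g : forall a, mul one a = a)
  (mulVg : forall a, mul (inv a) a = one)
  (mul_meas : measurable_fun setT (fun p : G * G => mul p.1 p.2))
  (inv_meas : measurable_fun setT inv)
  (* normalized (left) Haar measure *)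
  (lam : probability G R)
  (lam_haar : forall g (A : set G), measurable A ->
      lam [set mul g a | a in A] = lam A)
  (* measurable group action on X *)
  (act : G -> X -> X)
  (act_meas : measurable_fun setT (fun p : G * X => act p.1 p.2))
  (act1 : forall x, act one x = x)
  (actM : forall g h x, act (mul g h) x = act g (act h x))
  (* G-invariant data distribution *)
  (P : probability (X * Y)%type R)
  (P_inv : G_invariant act P)
  (* function class F = {h t | t : Theta} with a distribution on it *)
  (h : Theta -> X -> Y)
  (h_meas : measurable_fun setT
      (fun p : Theta * (X * Y) => loss01 R (h p.1 p.2.1) p.2.2))
  (PF : probability Theta R)
  (C : R) (C_gt0 : 0 < C) (n m : nat) (n_gt0 : (0 < n)%N) (m_gt0 : (0 < m)%N) :
  let E_emp := (\int[PF]_t iexp P n (fun D =>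
        (expR (n%:R * DC C (emp_risk R n (h t) D) (risk P (h t))))%:E))%E in
  let E_aug := (\int[PF]_t iexp P n (fun D =>
        (expR (n%:R * DC C (aug_risk lam act n (h t) D) (risk P (h t))))%:E))%E in
  let E_mc := (\int[PF]_t iexp P n (fun D => iexp lam (n * m) (fun Gs =>
        (expR (n%:R * DC C (mc_aug_risk R act n m (h t) D Gs) (risk P (h t))))%:E)))%E in
  [/\ (E_aug <= E_emp)%E, (E_mc <= E_emp)%E & E_emp = 1%E].
Proof.
move=> E_emp E_aug E_mc.
have ml t : measurable_fun setT (fun z : X * Y => loss01 R (h t z.1) z.2).
  exact: (measurableT_comp h_meas (pair1_measurable t)).
have mL t : measurable_fun setT
    (fun q : G * (X * Y) => loss01 R (h t (act q.1 q.2.1)) q.2.2).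
  have mphi : measurable_fun setT
      (fun q : G * (X * Y) => (t, (act q.1 q.2.1, q.2.2))).
  apply/measurable_fun_pairP; split => /=; first exact: measurable_cst.
  apply/measurable_fun_pairP; split => /=.
    have mpr : measurable_fun setT (fun q : G * (X * Y) => (q.1, q.2.1)).
      apply/measurable_fun_pairP; split => /=; first exact: measurable_fst.
      exact: (measurableT_comp measurable_fst measurable_snd).
    exact: (measurableT_comp act_meas mpr).
  exact: (measurableT_comp measurable_snd measurable_snd).
  exact: (measurableT_comp h_meas mphi).
have PF1 : (PF : {measure set Theta -> \bar R}) setT = 1%E := probability_setT PF.
have Eemp : E_emp = 1%E.
  rewrite /E_emp (eq_integral (fun t : Theta => cst 1%E t)).
    by rewrite integral_cst// PF1 mule1.
  by move=> t _; apply: emp_t => //.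
split => //; rewrite Eemp.
- rewrite /E_aug; apply: le_trans (_ : (\int[PF]_t cst 1%E t <= 1)%E); last first.
    by rewrite integral_cst// PF1 mule1.
  apply: le_integral_nm => t.
    by have /andP[] := @aug_t R dG dX dY G X Y lam act P P_inv act_meas (h t) (ml t) (mL t) C C_gt0 n n_gt0.
  by have /andP[] := @aug_t R dG dX dY G X Y lam act P P_inv act_meas (h t) (ml t) (mL t) C C_gt0 n n_gt0.
- rewrite /E_mc; apply: le_trans (_ : (\int[PF]_t cst 1%E t <= 1)%E); last first.
    by rewrite integral_cst// PF1 mule1.
  apply: le_integral_nm => t.
    by have /andP[] := @mc_t R dG dX dY G X Y lam act P P_inv act_meas (h t) (ml t) (mL t) C C_gt0 n m n_gt0 m_gt0.
  by have /andP[] := @mc_t R dG dX dY G X Y lam act P P_inv act_meas (h t) (ml t) (mL t) C C_gt0 n m n_gt0 m_gt0.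
Qed.
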